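(* The bidisc $\mathbb{D}\times\mathbb{D}$ and the domain $\Omega_1=\{(u,v)\in\mathbb{C}^2: |u^2|+|v^2|-1<|u^2+v^2-1|\}$ are biholomorphic.
   Context: $\mathbb{D}$ is the open unit disc in $\mathbb{C}$. *)

(* Defs.v *)
From Stdlib Require Import Reals.
From Coquelicot Require Import Coquelicot.
Open Scope R_scope.

Definition unit_disc : C -> Prop := fun z => Cmod z < 1.

Definition bidisc : C * C -> Prop :=
  fun p => unit_disc (fst p) /\ unit_disc (snd p).

Definition Omega1 : C * C -> Prop :=
  fun p => let u := fst p in let v := snd p in
    Cmod (u * u)%C + Cmod (v * v)%C - 1 < Cmod (u * u + v * v - 1)%C.

Definition C2_differentiable_at (F : C * C -> C) (p : C * C) : Prop :=
  exists a b : C, forall eps : R, 0 < eps -> exists delta : R, 0 < delta /\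
    forall h1 h2 : C, Cmod h1 < delta -> Cmod h2 < delta ->
      Cmod (F (fst p + h1, snd p + h2)%C - F p - (a * h1 + b * h2))%C
        <= eps * (Cmod h1 + Cmod h2).

Definition holomorphic_on (U : C * C -> Prop) (f : C * C -> C * C) : Prop :=
  forall p, U p ->
    C2_differentiable_at (fun q => fst (f q)) p /\
    C2_differentiable_at (fun q => snd (f q)) p.

Definition biholomorphic (U V : C * C -> Prop) : Prop :=
  exists f g : C * C -> C * C,
    (forall p, U p -> V (f p)) /\
    (forall q, V q -> U (g q)) /\
    (forall p, U p -> g (f p) = p) /\
    (forall q, V q -> f (g q) = q) /\
    holomorphic_on U f /\ holomorphic_on V g.

(* Main.v *)
From Stdlib Require Import Reals Lra Psatz.
From Coquelicot Require Import Coquelicot.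
Require Import Defs.
Open Scope R_scope.

Definition Csq (t : C) : C :=
  let r := Cmod t in
  (sqrt ((r + fst t) / 2),
   if Rlt_dec (snd t) 0 then - sqrt ((r - fst t) / 2) else sqrt ((r - fst t) / 2)).

Lemma Cmod_sq (t : C) : Cmod t ^ 2 = fst t ^ 2 + snd t ^ 2.
Proof. unfold Cmod. rewrite pow2_sqrt; nra. Qed.

Lemma Cmod_facts (x y : R) : 0 <= Cmod (x,y) /\ Cmod (x,y) ^2 = x^2 + y^2 /\
   - Cmod (x,y) <= x <= Cmod (x,y).
Proof.
  split; [apply Cmod_ge_0|]. split; [apply (Cmod_sq (x,y))|].
  pose proof (re_le_Cmod (x,y)). simpl in H. revert H. unfold Rabs; destruct (Rcase_abs x); intros; lra.
Qed.

Lemma Csq_sq t : (Csq t * Csq t)%C = t.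
Proof.
  destruct t as [x y]. unfold Csq. simpl fst; simpl snd.
  destruct (Cmod_facts x y) as [Hr0 [Hr2 Hrx]].
  set (r := Cmod (x, y)) in *.
  assert (H1 : 0 <= (r + x) / 2) by lra.
  assert (H2 : 0 <= (r - x) / 2) by lra.
  assert (Hp : sqrt ((r + x) / 2) * sqrt ((r - x) / 2) = Rabs y / 2).
  { rewrite <- sqrt_mult by lra.
    replace ((r + x) / 2 * ((r - x) / 2)) with (Rsqr (y / 2)) by (unfold Rsqr; nra).
    rewrite sqrt_Rsqr_abs. unfold Rdiv. rewrite Rabs_mult. rewrite (Rabs_right (/2)) by lra. lra. }
  pose proof (sqrt_sqrt _ H1). pose proof (sqrt_sqrt _ H2).
  unfold Cmult; simpl fst; simpl snd.
  destruct (Rlt_dec y 0).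
  - rewrite Rabs_left in Hp by lra. f_equal; nra.
  - rewrite Rabs_right in Hp by lra. f_equal; nra.
Qed.

Lemma Csq_re_nonneg t : 0 <= fst (Csq t).
Proof. unfold Csq; simpl. apply sqrt_pos. Qed.

Lemma Csq_re_pos t : ~ (snd t = 0 /\ fst t <= 0) -> 0 < fst (Csq t).
Proof.
  destruct t as [x y]. intros H. unfold Csq; simpl fst; simpl snd.
  destruct (Cmod_facts x y) as [Hr0 [Hr2 Hrx]].
  apply sqrt_lt_R0.
  destruct (Req_dec y 0) as [Hy|Hy].
  - assert (x > 0) by (destruct (Rle_dec x 0); [exfalso; apply H; simpl; split; auto| lra]). lra.
  - assert (- Cmod (x,y) < x) by (destruct (Rlt_dec (- Cmod (x,y)) x); [auto| assert (x = - Cmod (x,y)) by lra; exfalso; apply Hy; nra]).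
    lra.
Qed.

Lemma Csq_unique t s : 0 < fst s -> (s * s)%C = t -> Csq t = s.
Proof.
  intros Hs Ht.
  assert (E : ((Csq t - s) * (Csq t + s))%C = 0%C).
  { replace ((Csq t - s) * (Csq t + s))%C with (Csq t * Csq t - s * s)%C by ring.
    rewrite Csq_sq, Ht. ring. }
  destruct (Ceq_dec (Csq t + s) 0) as [E1|E1].
  2:{ replace (Csq t) with (Csq t - s + s)%C by ring. destruct (Ceq_dec (Csq t - s) 0) as [E2|E2].
      - rewrite E2. ring.
      - exfalso. exact (Cmult_neq_0 _ _ E2 E1 E). }
  exfalso. pose proof (Csq_re_nonneg t).
    apply (f_equal fst) in E1. revert E1 H. generalize (Csq t). intros c E1 H. destruct c, s. simpl in *. lra.
Qed.

Lemma deriv_of_bound (phi : C -> C) (t L : C) (d K : R) : 0 < d -> 0 <= K ->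
  (forall h, Cmod h < d -> Cmod (phi (t + h) - phi t - h * L)%C <= K * Cmod h ^ 2) ->
  @is_derive C_AbsRing (AbsRing_NormedModule C_AbsRing) phi t L.
Proof.
  intros Hd HK H. split.
  - apply is_linear_scal_l.
  - intros x Hx. apply (@is_filter_lim_locally_unique C_AbsRing (AbsRing_NormedModule C_AbsRing)) in Hx. subst x.
    intros eps. apply (@locally_norm_le_locally C_AbsRing (AbsRing_NormedModule C_AbsRing) t).
    assert (He : 0 < Rmin d (eps / (K + 1))).
    { apply Rmin_pos; auto. apply Rdiv_lt_0_compat; [apply cond_pos| lra]. }
    exists (mkposreal _ He). intros y Hy. unfold ball_norm in Hy. simpl in Hy.
    change (Cmod (phi y - phi t - (y - t) * L)%C <= eps * Cmod (y - t)%C).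
    change (Cmod (y - t)%C < Rmin d (eps / (K + 1))) in Hy.
    replace y with (t + (y - t))%C at 1 by ring.
    set (h := (y - t)%C) in *.
    assert (Hh1 : Cmod h < d) by (eapply Rlt_le_trans; [exact Hy| apply Rmin_l]).
    assert (Hh2 : Cmod h < eps / (K + 1)) by (eapply Rlt_le_trans; [exact Hy| apply Rmin_r]).
    eapply Rle_trans; [apply H; auto|].
    pose proof (Cmod_ge_0 h). pose proof (cond_pos eps).
    assert (Cmod h * (K + 1) < eps) by (apply (Rmult_lt_compat_r (K+1)) in Hh2; [|lra]; field_simplify in Hh2; lra).
    nra.
Qed.

Lemma fst_le_Cmod (c : C) : fst c <= Cmod c.
Proof. pose proof (re_le_Cmod c). unfold Re in H. revert H. unfold Rabs; destruct Rcase_abs; lra. Qed.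

Lemma Cmod_rev_tri (a b : C) : Cmod a - Cmod b <= Cmod (a + b)%C.
Proof.
  pose proof (Cmod_triangle (a + b)%C (- b)%C). rewrite Cmod_opp in H.
  replace (a + b + - b)%C with a in H by ring. lra.
Qed.

Lemma is_derive_Cinv (t : C) : t <> 0%C ->
  @is_derive C_AbsRing (AbsRing_NormedModule C_AbsRing) Cinv t (- / (t * t))%C.
Proof.
  intros Ht. pose proof (proj1 (Cmod_gt_0 t) Ht) as Hm.
  apply (deriv_of_bound _ _ _ (Cmod t / 2) (2 / Cmod t ^ 3)).
  - lra.
  - apply Rlt_le, Rdiv_lt_0_compat; [lra| apply pow_lt; lra].
  - intros h Hh.
    pose proof (Cmod_rev_tri t h) as Hth. pose proof (Cmod_ge_0 h).
    assert (Hth' : (t + h)%C <> 0%C) by (apply Cmod_gt_0; lra).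
    replace (/ (t + h) - / t - h * - / (t * t))%C with (h * h / (t * t * (t + h)))%C by (field; auto).
    rewrite Cmod_div by (apply Cmult_neq_0; [apply Cmult_neq_0|]; auto).
    rewrite !Cmod_mult.
    set (a := Cmod h) in *. set (m := Cmod t) in *. set (c := Cmod (t + h)%C) in *.
    assert (Hc : m / 2 <= c) by lra.
    assert (Hp : 0 < m * m * c) by (apply Rmult_lt_0_compat; nra). apply (Rmult_le_reg_r (m * m * c)); [exact Hp|].
    unfold Rdiv. rewrite Rmult_assoc, Rinv_l by (apply Rgt_not_eq; exact Hp).
    replace (2 * / m ^ 3 * a ^ 2 * (m * m * c)) with (2 * a^2 * c / m) by (field; lra).
    apply (Rmult_le_reg_r m); [lra|]. replace (2 * a ^ 2 * c / m * m) with (2 * a ^ 2 * c) by (field; lra). nra.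
Qed.

Lemma is_derive_Csq (t : C) : ~ (snd t = 0 /\ fst t <= 0) ->
  @is_derive C_AbsRing (AbsRing_NormedModule C_AbsRing) Csq t (/ (2 * Csq t))%C.
Proof.
  intros Ht. pose proof (Csq_re_pos t Ht) as Hb.
  set (B := Csq t) in *. set (b := fst B) in *.
  assert (HB : B <> 0%C) by (intro E; unfold b in Hb; rewrite E in Hb; simpl in Hb; lra).
  assert (HmB : b <= Cmod B) by apply fst_le_Cmod.
  apply (deriv_of_bound _ _ _ 1 (/ (2 * b ^ 3))).
  - lra.
  - apply Rlt_le, Rinv_0_lt_compat. apply Rmult_lt_0_compat; [lra| apply pow_lt; lra].
  - intros h _. fold B. set (A := Csq (t + h)).
    assert (HA : 0 <= fst A) by apply Csq_re_nonneg.
    assert (HAB : b <= Cmod (A + B)%C).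
    { eapply Rle_trans; [|apply fst_le_Cmod]. change (fst B <= fst A + fst B). unfold b in Hb. lra. }
    assert (Eh : h = ((A - B) * (A + B))%C).
    { replace ((A - B) * (A + B))%C with (A * A - B * B)%C by ring.
      unfold A, B. rewrite !Csq_sq. ring. }
    assert (Hmh : Cmod h = Cmod (A - B)%C * Cmod (A + B)%C) by (rewrite Eh; apply Cmod_mult).
    replace (A - B - h * / (2 * B))%C with (- ((A - B) * (A - B)) / (2 * B))%C
      by (rewrite Eh; field; auto).
    assert (H2 : (2 * B)%C <> 0%C) by (apply Cmult_neq_0; auto; intro E; apply (f_equal fst) in E; simpl in E; lra).
    rewrite Cmod_div by auto. rewrite Cmod_opp, !Cmod_mult.
    replace (Cmod 2) with 2 by (rewrite Cmod_R; symmetry; apply Rabs_right; lra).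
    set (e := Cmod (A - B)%C) in *. set (s := Cmod (A + B)%C) in *. set (mb := Cmod B) in *.
    pose proof (Cmod_ge_0 (A - B)%C). fold e in H.
    assert (He : e * b <= Cmod h) by (rewrite Hmh; apply Rmult_le_compat_l; lra).
    set (a := Cmod h) in *.
    apply (Rmult_le_reg_r (2 * mb)); [lra|].
    unfold Rdiv. rewrite Rmult_assoc, Rinv_l by lra.
    replace (/ (2 * b ^ 3) * a ^ 2 * (2 * mb)) with ((a / b) ^ 2 * (mb / b)) by (field; lra).
    assert (e <= a / b) by (apply (Rmult_le_reg_r b); [lra|]; unfold Rdiv; rewrite Rmult_assoc, Rinv_l; lra).
    assert (1 <= mb / b) by (apply (Rmult_le_reg_r b); [lra|]; unfold Rdiv; rewrite Rmult_assoc, Rinv_l; lra).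
    assert (e * e <= (a/b)^2) by nra.
    nra.
Qed.

Definition AN := AbsRing_NormedModule C_AbsRing.
Definition CC := prod_NormedModule C_AbsRing AN AN.
Definition D2 (F : C * C -> C) (p : C * C) : Prop :=
  exists l : CC -> AN, @filterdiff C_AbsRing CC AN F (locally (p : CC)) l.

Lemma D2_fst p : D2 (fun q => fst q) p.
Proof. exists (fun q : CC => fst q). apply filterdiff_linear, is_linear_fst. Qed.
Lemma D2_snd p : D2 (fun q => snd q) p.
Proof. exists (fun q : CC => snd q). apply filterdiff_linear, is_linear_snd. Qed.
Lemma D2_const p (c : C) : D2 (fun _ => c) p.
Proof. exists (fun _ : CC => (zero : AN)). apply (@filterdiff_const C_AbsRing CC AN); apply locally_filter. Qed.
Lemma D2_plus F G p : D2 F p -> D2 G p -> D2 (fun q => F q + G q)%C p.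
Proof.
  intros [lf Hf] [lg Hg]. exists (fun u => plus (lf u) (lg u)).
  eapply filterdiff_ext; [| apply (filterdiff_plus_fct _ _ _ _ Hf Hg)]. reflexivity.
Qed.
Lemma D2_minus F G p : D2 F p -> D2 G p -> D2 (fun q => F q - G q)%C p.
Proof.
  intros [lf Hf] [lg Hg]. exists (fun u => minus (lf u) (lg u)).
  eapply filterdiff_ext; [| apply (filterdiff_minus_fct _ _ _ _ Hf Hg)]. reflexivity.
Qed.
Lemma D2_mult F G p : D2 F p -> D2 G p -> D2 (fun q => F q * G q)%C p.
Proof.
  intros [lf Hf] [lg Hg]. eexists.
  eapply filterdiff_ext; [| apply (@filterdiff_mult_fct C_AbsRing CC F G p lf lg) ; auto].
  - reflexivity.
  - intros; apply Cmult_comm.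
Qed.
Lemma D2_comp (phi : C -> C) L F p :
  @is_derive C_AbsRing (AbsRing_NormedModule C_AbsRing) phi (F p) L -> D2 F p -> D2 (fun q => phi (F q)) p.
Proof.
  intros Hphi [lf Hf]. eexists. apply (@filterdiff_comp' C_AbsRing CC AN AN F phi p lf _ Hf Hphi).
Qed.
Lemma D2_ext F G p : (forall q, F q = G q) -> D2 F p -> D2 G p.
Proof. intros E [l H]. exists l. eapply filterdiff_ext; [|exact H]. exact E. Qed.

Definition e1 : CC := (@pair C C (RtoC 1) (RtoC 0)).
Definition e2 : CC := (@pair C C (RtoC 0) (RtoC 1)).

Lemma D2_C2 F p : D2 F p -> C2_differentiable_at F p.
Proof.
  intros [l [Hlin Hd]].
  assert (Hl : forall h1 h2 : C, l (@pair C C h1 h2 : CC) = (h1 * l e1 + h2 * l e2)%C).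
  { intros h1 h2.
    assert (E : (@pair C C h1 h2 : CC) = plus (scal h1 e1) (scal h2 e2)).
    { apply injective_projections; simpl; change (h1 = h1 * 1 + h2 * 0)%C || change (h2 = h1 * 0 + h2 * 1)%C; ring. }
    rewrite E, (linear_plus _ Hlin), !(linear_scal _ Hlin). reflexivity. }
  exists (l e1), (l e2).
  intros eps Heps.
  assert (Hp : is_filter_lim (locally (p : CC)) p) by (intros P HP; exact HP).
  specialize (Hd p Hp (mkposreal eps Heps)).
  apply (@locally_norm_le_locally C_AbsRing CC p _) in Hd.
  destruct Hd as [delta Hdelta].
  exists (delta / 2). split; [pose proof (cond_pos delta); lra|].
  intros h1 h2 H1 H2.
  destruct p as [p1 p2].
  specialize (Hdelta ((p1 + h1)%C, (p2 + h2)%C)).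
  assert (Em : minus (@pair C C (p1 + h1)%C (p2 + h2)%C : CC) (@pair C C p1 p2 : CC) = (@pair C C h1 h2 : CC)).
  { apply injective_projections; simpl; change ((p1 + h1) + - p1 = h1)%C || change ((p2 + h2) + - p2 = h2)%C; ring. }
  assert (Hn : norm (@pair C C h1 h2 : CC) <= Cmod h1 + Cmod h2).
  { change (sqrt (Cmod h1 ^ 2 + Cmod h2 ^ 2) <= Cmod h1 + Cmod h2).
    pose proof (Cmod_ge_0 h1). pose proof (Cmod_ge_0 h2).
    rewrite <- (sqrt_pow2 (Cmod h1 + Cmod h2)) by lra.
    apply sqrt_le_1_alt. nra. }
  rewrite Em in Hdelta.
  assert (Hb : ball_norm (@pair C C p1 p2 : CC) delta (@pair C C (p1 + h1)%C (p2 + h2)%C : CC)).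
  { unfold ball_norm. rewrite Em. lra. }
  specialize (Hdelta Hb). simpl in Hdelta. rewrite Hl in Hdelta.
  simpl fst; simpl snd.
  assert (Hd2 : Cmod (F ((p1 + h1)%C, (p2 + h2)%C) - F (p1, p2) - (l e1 * h1 + l e2 * h2))%C <= eps * (Cmod h1 + Cmod h2)).
  { replace (l e1 * h1 + l e2 * h2)%C with (h1 * l e1 + h2 * l e2)%C by ring. eapply Rle_trans; [exact Hdelta|]. apply Rmult_le_compat_l; lra. }
  exact Hd2.
Qed.

Definition fmap (q : C * C) : C * C :=
  ((fst q + snd q) / (1 + fst q * snd q), Ci * (fst q - snd q) / (1 + fst q * snd q))%C.

Lemma Ci2 : (Ci * Ci = - (1))%C.
Proof. apply injective_projections; simpl; ring. Qed.

Lemma Cmod_sq2 (x : C) : Cmod (x * x)%C = fst x ^ 2 + snd x ^ 2.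
Proof. rewrite Cmod_mult. rewrite <- Cmod_sq. ring. Qed.

Lemma Omega1_fmap (z w : C) : (1 + z * w)%C <> 0%C ->
  (Omega1 (fmap (z, w)) <-> 0 < (1 - Cmod z ^ 2) * (1 - Cmod w ^ 2)).
Proof.
  intros Hd. unfold Omega1, fmap. simpl fst; simpl snd.
  set (d := (1 + z * w)%C) in *.
  assert (Hdm : 0 < Cmod d) by (apply Cmod_gt_0; auto).
  assert (E1 : ((z + w) / d * ((z + w) / d) + Ci * (z - w) / d * (Ci * (z - w) / d) - 1)%C
              = (- ((1 - z * w) * (1 - z * w)) / (d * d))%C).
  { replace (Ci * (z - w) / d * (Ci * (z - w) / d))%C with (Ci * Ci * ((z - w) * (z - w)) / (d * d))%C by (field; auto).
    rewrite Ci2. unfold d. field. auto. }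
  rewrite E1.
  rewrite Cmod_div by (apply Cmult_neq_0; auto).
  rewrite Cmod_opp, !Cmod_mult, !Cmod_div by auto.
  rewrite Cmod_mult, Cmod_Ci.
  assert (Hsq : forall x : C, Cmod x * Cmod x = fst x ^ 2 + snd x ^ 2) by (intros; rewrite <- Cmod_sq; ring).
  replace (Cmod (z + w)%C / Cmod d * (Cmod (z + w)%C / Cmod d)) with ((Cmod (z + w)%C * Cmod (z + w)%C) / (Cmod d * Cmod d)) by (field; lra).
  replace (1 * Cmod (z - w)%C / Cmod d * (1 * Cmod (z - w)%C / Cmod d)) with ((Cmod (z - w)%C * Cmod (z - w)%C) / (Cmod d * Cmod d)) by (field; lra).
  rewrite !Hsq.
  assert (Hdd : 0 < Cmod d * Cmod d) by nra.
  rewrite Hsq in Hdd.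
  rewrite !Cmod_sq.
  assert (I1 : (fst (z + w)%C ^ 2 + snd (z + w)%C ^ 2) + (fst (z - w)%C ^ 2 + snd (z - w)%C ^ 2)
     = 2 * (fst z ^ 2 + snd z ^ 2) + 2 * (fst w ^ 2 + snd w ^ 2)) by (destruct z, w; simpl; ring).
  assert (I2 : (fst d ^ 2 + snd d ^ 2) + (fst (1 - z * w)%C ^ 2 + snd (1 - z * w)%C ^ 2)
     = 2 + 2 * (fst z ^ 2 + snd z ^ 2) * (fst w ^ 2 + snd w ^ 2)) by (unfold d; destruct z, w; simpl; ring).
  revert I1 I2 Hdd.
  generalize (fst (z + w)%C ^ 2 + snd (z + w)%C ^ 2) (fst (z - w)%C ^ 2 + snd (z - w)%C ^ 2)
    (fst d ^ 2 + snd d ^ 2) (fst (1 - z * w)%C ^ 2 + snd (1 - z * w)%C ^ 2)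
    (fst z ^ 2 + snd z ^ 2) (fst w ^ 2 + snd w ^ 2).
  intros A B D E Z W I1 I2 HD.
  replace (A / D + B / D - 1) with ((A + B - D) / D) by (field; lra).
  split; intros H.
  - apply (Rmult_lt_compat_r D) in H; [|lra].
    unfold Rdiv in H. rewrite !Rmult_assoc, !Rinv_l in H by lra. nra.
  - apply (Rmult_lt_reg_r D); [lra|]. unfold Rdiv. rewrite !Rmult_assoc, !Rinv_l by lra. nra.
Qed.

Definition Sg (q : C * C) : C := Csq (1 - fst q * fst q - snd q * snd q)%C.
Definition gmap (q : C * C) : C * C :=
  ((fst q - Ci * snd q) / (1 + Sg q), (fst q + Ci * snd q) / (1 + Sg q))%C.

Lemma Omega1_slit (q : C * C) : Omega1 q ->
  ~ (snd (1 - fst q * fst q - snd q * snd q)%C = 0 /\ fst (1 - fst q * fst q - snd q * snd q)%C <= 0).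
Proof.
  destruct q as [u v]. unfold Omega1. intros H [H1 H2].
  change (fst (u, v)) with u in *. change (snd (u, v)) with v in *.
  set (t := (1 - u * u - v * v)%C) in *.
  assert (E1 : (u * u + v * v - 1)%C = (- t)%C) by (unfold t; ring).
  assert (E2 : (u * u + v * v)%C = (1 - t)%C) by (unfold t; ring).
  pose proof (Cmod_triangle (u * u)%C (v * v)%C) as Ht. rewrite E2 in Ht.
  rewrite E1, Cmod_opp in H.
  assert (Et : t = RtoC (fst t)) by (clearbody t; destruct t; simpl in *; subst; reflexivity).
  rewrite Et in H, Ht. rewrite Cmod_R in H.
  replace (1 - RtoC (fst t))%C with (RtoC (1 - fst t)) in Ht by (apply injective_projections; simpl; ring).
  rewrite Cmod_R in Ht.
  rewrite Rabs_left1 in H by lra. rewrite Rabs_right in Ht by lra. lra.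
Qed.

Lemma Sg_re_pos q : Omega1 q -> 0 < fst (Sg q).
Proof. intros H. apply Csq_re_pos, Omega1_slit, H. Qed.

Lemma onepS_neq (S : C) : 0 <= fst S -> (1 + S)%C <> 0%C.
Proof. intros H E. apply (f_equal fst) in E. simpl in E. lra. Qed.

Lemma fg_alg (p q S : C) : (S * S = 1 - p * q)%C -> (1 + S)%C <> 0%C ->
  (1 + p / (1 + S) * (q / (1 + S)) = 2 / (1 + S))%C.
Proof.
  intros HS H1.
  replace (p / (1 + S) * (q / (1 + S)))%C with ((p * q) / ((1 + S) * (1 + S)))%C by (field; auto).
  replace (p * q)%C with (1 - S * S)%C by (rewrite HS; ring).
  field. auto.
Qed.

Lemma f_g q : Omega1 q -> fmap (gmap q) = q.
Proof.
  intros H. pose proof (Sg_re_pos q H) as HS.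
  assert (H1 : (1 + Sg q)%C <> 0%C) by (apply onepS_neq; lra).
  assert (HSS : (Sg q * Sg q = 1 - (fst q - Ci * snd q) * (fst q + Ci * snd q))%C).
  { unfold Sg. rewrite Csq_sq.
    replace ((fst q - Ci * snd q) * (fst q + Ci * snd q))%C with (fst q * fst q - Ci * Ci * (snd q * snd q))%C by ring.
    rewrite Ci2. ring. }
  unfold fmap, gmap. simpl fst; simpl snd.
  rewrite (fg_alg _ _ _ HSS H1).
  assert (H2 : (2 / (1 + Sg q))%C <> 0%C).
  { intro E. apply (f_equal (fun x => x * (1 + Sg q))%C) in E.
    replace (2 / (1 + Sg q) * (1 + Sg q))%C with (RtoC 2) in E by (field; auto).
    rewrite Cmult_0_l in E. apply (f_equal fst) in E. simpl in E. lra. }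
  destruct q as [u v]. simpl fst in *; simpl snd in *.
  apply injective_projections; simpl fst; simpl snd.
  - field. auto.
  - replace (Ci * ((u - Ci * v) / (1 + Sg (u, v)) - (u + Ci * v) / (1 + Sg (u, v))) / (2 / (1 + Sg (u, v))))%C
      with (- (Ci * Ci) * v)%C by (field; auto).
    rewrite Ci2. ring.
Qed.

Lemma Cmod_lt1_sq (z : C) : Cmod z < 1 <-> fst z ^ 2 + snd z ^ 2 < 1.
Proof.
  rewrite <- Cmod_sq. pose proof (Cmod_ge_0 z). split; intros; nra.
Qed.

Lemma d_neq (z w : C) : Cmod z < 1 -> Cmod w < 1 -> (1 + z * w)%C <> 0%C.
Proof.
  intros Hz Hw E.
  pose proof (Cmod_ge_0 z). pose proof (Cmod_ge_0 w).
  assert (Cmod (z * w)%C = 1).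
  { replace (z * w)%C with (- (1))%C by (rewrite <- (Cplus_0_l (- (1))%C), <- E; ring).
    rewrite Cmod_opp, Cmod_1. reflexivity. }
  rewrite Cmod_mult in H1. nra.
Qed.

Lemma re_ratio_pos (m : C) : Cmod m < 1 -> 0 < fst ((1 - m) / (1 + m))%C.
Proof.
  intros Hm. apply Cmod_lt1_sq in Hm. destruct m as [a b]. simpl in Hm.
  unfold Cdiv, Cmult, Cinv. simpl.
  assert (HD : 0 < (1 + a) * ((1 + a) * 1) + (0 + b) * ((0 + b) * 1)) by nra.
  replace ((1 + - a) * ((1 + a) / ((1 + a) * ((1 + a) * 1) + (0 + b) * ((0 + b) * 1))) -
     (0 + - b) * (- (0 + b) / ((1 + a) * ((1 + a) * 1) + (0 + b) * ((0 + b) * 1))))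
    with ((1 - (a * (a * 1) + b * (b * 1))) / ((1 + a) * ((1 + a) * 1) + (0 + b) * ((0 + b) * 1)))
    by (field; lra).
  apply Rdiv_lt_0_compat; lra.
Qed.

Lemma two_neq : (RtoC 2) <> 0%C.
Proof. intro E. apply (f_equal fst) in E. simpl in E. lra. Qed.

Lemma g_f q : bidisc q -> gmap (fmap q) = q.
Proof.
  destruct q as [z w]. intros [Hz Hw]. unfold unit_disc in *. simpl in Hz, Hw.
  pose proof (d_neq z w Hz Hw) as Hd.
  assert (Hm : Cmod (z * w)%C < 1).
  { rewrite Cmod_mult. pose proof (Cmod_ge_0 z). pose proof (Cmod_ge_0 w). nra. }
  assert (HS : Sg (fmap (z, w)) = ((1 - z * w) / (1 + z * w))%C).
  { unfold Sg. apply Csq_unique. apply re_ratio_pos; auto.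
    unfold fmap. simpl fst; simpl snd.
    replace (Ci * (z - w) / (1 + z * w) * (Ci * (z - w) / (1 + z * w)))%C
      with (Ci * Ci * ((z - w) * (z - w)) / ((1 + z * w) * (1 + z * w)))%C by (field; auto).
    rewrite Ci2. field. auto. }
  unfold gmap. rewrite HS. unfold fmap. simpl fst; simpl snd.
  replace (Ci * (Ci * (z - w) / (1 + z * w)))%C with (Ci * Ci * (z - w) / (1 + z * w))%C by (field; auto).
  rewrite Ci2.
  pose proof two_neq.
  apply injective_projections; simpl fst; simpl snd; field; split; auto;
    intro E; apply H; rewrite <- E; field; auto.
Qed.

Lemma f_in q : bidisc q -> Omega1 (fmap q).
Proof.
  destruct q as [z w]. intros [Hz Hw]. unfold unit_disc in *. simpl in Hz, Hw.
  apply Omega1_fmap. apply d_neq; auto.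
  pose proof (Cmod_ge_0 z). pose proof (Cmod_ge_0 w).
  apply Rmult_lt_0_compat; nra.
Qed.

Lemma g_in q : Omega1 q -> bidisc (gmap q).
Proof.
  intros H. pose proof (Sg_re_pos q H) as HS.
  assert (H1 : (1 + Sg q)%C <> 0%C) by (apply onepS_neq; lra).
  assert (HSS : (Sg q * Sg q = 1 - (fst q - Ci * snd q) * (fst q + Ci * snd q))%C).
  { unfold Sg. rewrite Csq_sq.
    replace ((fst q - Ci * snd q) * (fst q + Ci * snd q))%C with (fst q * fst q - Ci * Ci * (snd q * snd q))%C by ring.
    rewrite Ci2. ring. }
  pose proof (f_g q H) as Efg.
  assert (Hd : (1 + fst (gmap q) * snd (gmap q))%C <> 0%C).
  { unfold gmap. simpl fst; simpl snd. rewrite (fg_alg _ _ _ HSS H1).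
    intro E. apply (f_equal (fun x => x * (1 + Sg q))%C) in E.
    replace (2 / (1 + Sg q) * (1 + Sg q))%C with (RtoC 2) in E by (field; auto).
    rewrite Cmult_0_l in E. apply two_neq, E. }
  assert (Hzw : (fst (gmap q) * snd (gmap q))%C = ((1 - Sg q) / (1 + Sg q))%C).
  { unfold gmap. simpl fst; simpl snd.
    replace ((fst q - Ci * snd q) / (1 + Sg q) * ((fst q + Ci * snd q) / (1 + Sg q)))%C
      with (((fst q - Ci * snd q) * (fst q + Ci * snd q)) / ((1 + Sg q) * (1 + Sg q)))%C by (field; auto).
    replace ((fst q - Ci * snd q) * (fst q + Ci * snd q))%C with (1 - Sg q * Sg q)%C by (rewrite HSS; ring).
    field. auto. }
  assert (Hm : Cmod (fst (gmap q) * snd (gmap q))%C < 1).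
  { rewrite Hzw, Cmod_div by auto.
    assert (Hlt : Cmod (1 - Sg q)%C < Cmod (1 + Sg q)%C).
    { pose proof (Cmod_ge_0 (1 - Sg q)%C). pose proof (Cmod_ge_0 (1 + Sg q)%C).
      assert (Cmod (1 - Sg q)%C ^ 2 < Cmod (1 + Sg q)%C ^ 2).
      { rewrite !Cmod_sq. destruct (Sg q) as [s1 s2]. simpl in *. nra. }
      nra. }
    pose proof (proj1 (Cmod_gt_0 _) H1).
    apply (Rmult_lt_reg_r (Cmod (1 + Sg q)%C)); [lra|]. unfold Rdiv.
    rewrite Rmult_assoc, Rinv_l by lra. lra. }
  destruct (gmap q) as [z w] eqn:Eg. simpl fst in *; simpl snd in *.
  rewrite <- Efg in H.
  apply (Omega1_fmap z w Hd) in H.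
  rewrite Cmod_mult in Hm.
  pose proof (Cmod_ge_0 z). pose proof (Cmod_ge_0 w).
  split; unfold unit_disc; simpl.
  - destruct (Rlt_dec (Cmod z) 1); auto. exfalso.
    assert (1 <= Cmod z ^ 2) by nra. assert (1 - Cmod w ^ 2 < 0) by nra.
    assert (Cmod z * Cmod w < 1) by lra. nra.
  - destruct (Rlt_dec (Cmod w) 1); auto. exfalso.
    assert (1 <= Cmod w ^ 2) by nra. assert (1 - Cmod z ^ 2 < 0) by nra.
    nra.
Qed.

Lemma D2_inv (F : C * C -> C) (p : C * C) : F p <> 0%C -> D2 F p -> D2 (fun q => / F q)%C p.
Proof. intros H HF. exact (D2_comp Cinv _ F p (is_derive_Cinv _ H) HF). Qed.

Lemma D2_sq (F : C * C -> C) (p : C * C) : ~ (snd (F p) = 0 /\ fst (F p) <= 0) -> D2 F p -> D2 (fun q => Csq (F q)) p.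
Proof. intros H HF. exact (D2_comp Csq _ F p (is_derive_Csq _ H) HF). Qed.

Lemma hol_f : holomorphic_on bidisc fmap.
Proof.
  intros p Hp. pose proof Hp as [Hz Hw]. unfold unit_disc in *.
  pose proof (d_neq _ _ Hz Hw) as Hd.
  assert (HD : D2 (fun q => 1 + fst q * snd q)%C p) by (apply D2_plus; [apply D2_const| apply D2_mult; [apply D2_fst|apply D2_snd]]).
  split; apply D2_C2; simpl.
  - apply (D2_mult (fun q => fst q + snd q)%C (fun q => / (1 + fst q * snd q))%C).
    + apply D2_plus; [apply D2_fst|apply D2_snd].
    + apply (D2_inv (fun q => 1 + fst q * snd q)%C); auto.
  - apply (D2_mult (fun q => Ci * (fst q - snd q))%C (fun q => / (1 + fst q * snd q))%C).
    + apply D2_mult; [apply D2_const| apply D2_minus; [apply D2_fst|apply D2_snd]].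
    + apply (D2_inv (fun q => 1 + fst q * snd q)%C); auto.
Qed.

Lemma hol_g : holomorphic_on Omega1 gmap.
Proof.
  intros p Hp.
  pose proof (Sg_re_pos p Hp) as HS.
  assert (H1 : (1 + Sg p)%C <> 0%C) by (apply onepS_neq; lra).
  assert (HT : D2 (fun q => 1 - fst q * fst q - snd q * snd q)%C p).
  { apply D2_minus; [apply D2_minus; [apply D2_const| apply D2_mult; apply D2_fst]| apply D2_mult; apply D2_snd]. }
  assert (HD : D2 (fun q => / (1 + Sg q))%C p).
  { apply (D2_inv (fun q => 1 + Sg q)%C); auto.
    apply D2_plus; [apply D2_const|].
    apply (D2_sq (fun q => 1 - fst q * fst q - snd q * snd q)%C); auto.
    apply Omega1_slit; auto. }
  split; apply D2_C2; simpl.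
  - apply (D2_mult (fun q => fst q - Ci * snd q)%C (fun q => / (1 + Sg q))%C); auto.
    apply D2_minus; [apply D2_fst| apply D2_mult; [apply D2_const| apply D2_snd]].
  - apply (D2_mult (fun q => fst q + Ci * snd q)%C (fun q => / (1 + Sg q))%C); auto.
    apply D2_plus; [apply D2_fst| apply D2_mult; [apply D2_const| apply D2_snd]].
Qed.

Theorem theorem4p6 : biholomorphic bidisc Omega1.
Proof.
  exists fmap, gmap. split; [exact f_in|]. split; [exact g_in|].
  split; [exact g_f|]. split; [exact f_g|]. split; [exact hol_f| exact hol_g].
Qed.
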